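(* Suppose Assumption 1 holds. Then for any $\ell=1,\dots,\mathsf{L}$ the joint kernel $\bm p_\ell$ satisfies a drift condition: there exist a measurable function $V:\mathsf{X}^2\to[1,\infty)$, a small set $S\in\mathcal{B}(\mathsf{X}^2)$ for $\bm p_\ell$, and constants $\lambda\in(0,1)$, $\kappa<\infty$ such that $$(\bm P_\ell V)(\bm\theta_\ell)\le\lambda V(\bm\theta_\ell)+\kappa\mathbf 1_{\{\bm\theta_\ell\in S\}}\qquad\forall\bm\theta_\ell\in\mathsf{X}^2.$$
   Context: Setting: $\mathsf{X}$ separable Banach space, prior $\mu_{\mathrm{pr}}$; posteriors $\mu^y_j$ with $\mu_{\mathrm{pr}}$-densities $\pi^y_j$; proposal density $Q_\ell$ w.r.t. $\mu_{\mathrm{pr}}$; $\alpha_j(\theta,z)=\min\{1,\frac{\pi^y_j(z)Q_\ell(\theta)}{\pi^y_j(\theta)Q_\ell(z)}\}$. Joint kernel for $\bm\theta_\ell=(\theta_{\ell,\ell-1},\theta_{\ell,\ell})$: $\bm p_\ell(\bm\theta_\ell,A)=\int\min\{\alpha_{\ell-1}(\theta_{\ell,\ell-1},z),\alpha_\ell(\theta_{\ell,\ell},z)\}\mathbf 1_{\{(z,z)\in A\}}Q_\ell(z)\mu_{\mathrm{pr}}(\mathrm{d}z)+\int(\alpha_{\ell-1}(\theta_{\ell,\ell-1},z)-\alpha_\ell(\theta_{\ell,\ell},z))^+\mathbf 1_{\{(z,\theta_{\ell,\ell})\in A\}}Q_\ell(z)\mu_{\mathrm{pr}}(\mathrm{d}z)+\int(\alpha_\ell(\theta_{\ell,\ell},z)-\alpha_{\ell-1}(\theta_{\ell,\ell-1},z))^+\mathbf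 1_{\{(\theta_{\ell,\ell-1},z)\in A\}}Q_\ell(z)\mu_{\mathrm{pr}}(\mathrm{d}z)+\mathbf 1_{\{\bm\theta_\ell\in A\}}(1-\int\max\{\alpha_{\ell-1}(\theta_{\ell,\ell-1},z),\alpha_\ell(\theta_{\ell,\ell},z)\}Q_\ell(z)\mu_{\mathrm{pr}}(\mathrm{d}z))$, operator $(\bm P_\ell f)(\bm\theta)=\int f\,\mathrm{d}\bm p_\ell(\bm\theta,\cdot)$. A set $S$ is small for a kernel $p$ if there exist $m\in\mathbb{N}$ and a non-trivial positive measure $\nu$ with $p^m(x,A)\ge\nu(A)$ for all $x\in S$ and measurable $A$. Assumption 1: (1.1) $Q_\ell$ continuous and positive; (1.2) each $\pi^y_j$ continuous and positive; (1.3) for $j=\ell-1,\ell$, all $c_r>0$, $\{\theta: Q_\ell(\theta)/\pi^y_j(\theta)\le c_r\}$ compact; (1.4) $\exists c\in(0,1)$ independent of $\ell$ with $\operatorname{ess\,inf}_z Q_\ell(z)/\pi^y_j(z)\ge c$; (1.5) $\exists r>1,C_r$ independent of $\ell$ with $\int Q_\ell^r\mathrm{d}\mu_{\mathrm{pr}}\le C_r$. *)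

(* Defs.v *)
From HB Require Import structures.
From mathcomp Require Import all_boot all_order all_algebra.
From mathcomp Require Import all_classical all_reals all_analysis ess_sup_inf.
Set Implicit Arguments. Unset Strict Implicit. Unset Printing Implicit Defensive.
Import Order.TTheory GRing.Theory Num.Theory.
Import numFieldNormedType.Exports.
Local Open Scope classical_set_scope.
Local Open Scope ring_scope.

Definition separable (T : topologicalType) : Prop :=
  exists D : set T, countable D /\ dense D.

(* The Borel sigma-algebra of a normed space X: the sigma-algebra generated
   by the open sets.  [BX X] is X itself, equipped with this measurable
   structure; X * X then carries the product sigma-algebra (which equals the
   Borel sigma-algebra of X^2 for separable X). *)
Definition BX (R : realType) (X : normedModType R) : Type :=
  g_sigma_algebraType (@open X).

Section kernel.
Context (R : realType) (X : normedModType R) (mu : probability (BX X) R).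
Variables (pim pil Q : BX X -> R).
(* pim = pi^y_{l-1}, pil = pi^y_l, Q = Q_l *)

Definition alpha (pij : BX X -> R) (th z : BX X) : R :=
  Num.min 1 ((pij z * Q th) / (pij th * Q z)).

Local Open Scope ereal_scope.

(* (P_l f)(theta) = \int f d p_l(theta, .), written out for the joint kernel
   p_l of the statement (f : X^2 -> [0, +oo]). *)
Definition Pop (f : BX X * BX X -> \bar R) (th : BX X * BX X) : \bar R :=
  \int[mu]_z ((Num.min (alpha pim th.1 z) (alpha pil th.2 z) * Q z)%:E
                * f (z, z))
  + \int[mu]_z ((Num.max (alpha pim th.1 z - alpha pil th.2 z) 0 * Q z)%:E
                * f (z, th.2))
  + \int[mu]_z ((Num.max (alpha pil th.2 z - alpha pim th.1 z) 0 * Q z)%:E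
                * f (th.1, z))
  + f th * (1 - \int[mu]_z ((Num.max (alpha pim th.1 z)
                                      (alpha pil th.2 z) * Q z)%:E)).

Definition pker (th : BX X * BX X) (A : set (BX X * BX X)) : \bar R :=
  Pop (fun x => (\1_A x)%:E) th.

Definition pker_iter (m : nat) (th : BX X * BX X) (A : set (BX X * BX X))
  : \bar R := iter m Pop (fun x => (\1_A x)%:E) th.

Definition small_set (S : set (BX X * BX X)) : Prop :=
  exists m : nat, (0 < m)%N /\
  exists nu : {measure set (BX X * BX X) -> \bar R},
    0 < nu setT /\
    forall x, S x -> forall A, measurable A -> nu A <= pker_iter m x A.

End kernel.

(* Main.v *)
Require Import Defs.
From HB Require Import structures.
From mathcomp Require Import all_boot all_order all_algebra.
From mathcomp Require Import all_classical all_reals all_analysis ess_sup_inf.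
Import Order.TTheory GRing.Theory Num.Theory.
Import numFieldNormedType.Exports.
Local Open Scope classical_set_scope.
Local Open Scope ring_scope.
Lemma measurable_inv (R : realType) :
  measurable_fun setT (GRing.inv : R -> R).
Proof.
have -> : [set: R] = ~` [set 0] `|` [set 0] by rewrite setvU.
apply/measurable_funU => //; first exact: measurableC.
split; last exact: measurable_fun_set1.
apply: measurable_realfun.open_continuous_measurable_fun.
  rewrite openC; apply: accessible_closed_set1; apply: hausdorff_accessible; exact: Rhausdorff.  
move=> x; rewrite inE /= => x0.
by apply: inv_continuous; apply/eqP.
Qed.
From mathcomp Require Import ring lra.
Import measurable_realfun.
Lemma bound_ratio (R : realType) (X : normedModType R) (Q p : X -> R) :
  continuous Q -> continuous p -> (forall x, 0 < Q x) -> (forall x, 0 < p x) ->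
  compact [set th | Q th / p th <= 1] -> exists M, 0 < M /\ forall x, p x / Q x <= M.
Proof.
move=> cQ cp Qp pp cK.
have cf : continuous (fun x => p x / Q x).
  move=> x; apply: cvgM; first exact: cp.
  by apply: cvgV; [rewrite gt_eqF | exact: cQ].
have := compact_bounded (continuous_compact (continuous_subspaceT cf) cK).
case=> r [rreal Hr].
have /Hr H : Num.max r 0 + 1 > r by rewrite ltr_pwDr // le_max lexx.
exists (Num.max (Num.max r 0 + 1) 1); split; first by rewrite lt_max ltr01 orbT.
move=> x; have [xK|xK] := leP (Q x / p x) 1.
  have : `|p x / Q x| <= Num.max r 0 + 1 by apply: H; exists x.
  move/(le_trans (ler_norm _)) => h; rewrite le_max h //.
rewrite le_max; apply/orP; right; apply/ltW.
have -> : p x / Q x = (Q x / p x)^-1 by rewrite invf_div.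
by rewrite invf_lt1 // divr_gt0.
Qed.
Section diagm.
Context (R : realType) (X : normedModType R).
Variable m : {measure set (BX X) -> \bar R}.
Definition dg (z : BX X) : BX X * BX X := (z, z).
Lemma mdg : measurable_fun setT dg.
Proof. exact: measurable_fun_pair. Qed.
Definition dm := pushforward m dg.
Let dm0 : dm set0 = 0%E.
Proof. by rewrite /dm /pushforward preimage_set0 measure0. Qed.
Let dm_ge0 A : (0 <= dm A)%E.
Proof. rewrite /dm /pushforward; exact: measure_ge0. Qed.
Let dm_sigma_additive : semi_sigma_additive dm.
Proof.
move=> F mF tF mUF; rewrite /dm /pushforward preimage_bigcup.
apply: measure_semi_sigma_additive.
- by move=> n; have := mdg measurableT _ (mF n); rewrite setTI.
- apply/trivIsetP => /= i j _ _ ij; rewrite -preimage_setI.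
  by move/trivIsetP : tF => /(_ _ _ _ _ ij) ->//; rewrite preimage_set0.
- by rewrite -preimage_bigcup; have := mdg measurableT _ mUF; rewrite setTI.
Qed.
HB.instance Definition _ := isMeasure.Build _ _ _
  dm dm0 dm_ge0 dm_sigma_additive.
End diagm.
Arguments dm {R X}.
Arguments dg {R X}.
Arguments mdg {R X}.
Section parts.
Context (R : realType) (X : normedModType R) (mu : probability (BX X) R).
Variables (Q : BX X -> R).
Hypothesis mQ : measurable_fun setT Q.
Hypothesis Qpos : forall x, 0 < Q x.
Hypothesis Q1 : (\int[mu]_x (Q x)%:E = 1)%E.

Lemma malpha (pij : BX X -> R) th : measurable_fun setT pij ->
  measurable_fun setT (alpha Q pij th).
Proof.
move=> mp; rewrite /alpha.
apply: (@measurable_minr _ _ _ _ (fun=> 1) (fun z => (pij z * Q th) / (pij th * Q z))) => //.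
apply: measurable_funM; first exact: measurable_funM.
have mg : measurable_fun setT (fun z => pij th * Q z).
  by apply: measurable_funM.
exact: (measurableT_comp (measurable_inv R) mg).
Qed.
Lemma alpha01 (pij : BX X -> R) th z : (forall x, 0 < pij x) ->
  0 <= alpha Q pij th z <= 1.
Proof.
move=> pp; rewrite /alpha; apply/andP; split.
  rewrite le_min ler01 /=; apply/ltW; apply: divr_gt0; apply: mulr_gt0; auto.
by rewrite ge_min lexx.
Qed.

Lemma int_le1 (h : BX X -> R) : measurable_fun setT h ->
  (forall z, 0 <= h z <= 1) -> (\int[mu]_z (h z * Q z)%:E <= 1)%E.
Proof.
move=> mh h01; rewrite -Q1; apply: ge0_le_integral => //.
- move=> z _; rewrite lee_fin; apply: mulr_ge0; [by case/andP: (h01 z)|exact/ltW].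
- apply/measurable_EFinP; exact: measurable_funM.
- by apply/measurable_EFinP.
- move=> z _; rewrite lee_fin ler_piMl //; [exact/ltW| by case/andP: (h01 z)].
Qed.


Lemma alpha_lb (pij : BX X -> R) th z M : (forall x, 0 < pij x) -> 0 < M ->
  pij th / Q th <= M -> Num.min 1 (pij z / (M * Q z)) <= alpha Q pij th z.
Proof.
move=> pp M0 hM; rewrite /alpha le_min; apply/andP; split.
  by rewrite ge_min lexx.
rewrite ge_min; apply/orP; right.
have qz := Qpos z; have qt := Qpos th; have pz := pp z; have pt := pp th.
have -> : pij z / (M * Q z) = (pij z / Q z) * M^-1.
  by field; rewrite ?gt_eqF.
have -> : pij z * Q th / (pij th * Q z) = (pij z / Q z) * (pij th / Q th)^-1.
  by field; rewrite ?gt_eqF.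
apply: ler_wpM2l; first by rewrite divr_ge0 // ltW.
by rewrite lef_pV2 // posrE divr_gt0.
Qed.

Lemma mEset (g : BX X -> R) eps : measurable_fun setT g ->
  measurable [set z | eps <= g z].
Proof.
move=> mg; have := mg measurableT _ (measurable_itv `[eps, +oo[).
rewrite setTI (_ : [set z | eps <= g z] = g @^-1` `[eps, +oo[%classic) //.
by apply/seteqP; split=> z /=; rewrite in_itv /= andbT.
Qed.

Lemma pos_set (g : BX X -> R) : measurable_fun setT g -> (forall z, 0 < g z) ->
  exists n, (0 < mu [set z | (n.+1%:R^-1 <= g z)%R])%E.
Proof.
move=> mg gp; apply: contrapT => H.
have H0 n : mu [set z | (n.+1%:R^-1 <= g z)%R] = 0%E.
  apply/eqP; rewrite eq_le measure_ge0 andbT leNgt; apply/negP => h.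
  by apply: H; exists n.
have : (mu setT <= \sum_(n <oo) mu [set z | (n.+1%:R^-1 <= g z)%R])%E.
  apply: measure_sigma_subadditive => //.
    by move=> n; apply: mEset.
  move=> z _; have [k hk] := ltr_add_invr (gp z).
  by exists k => //=; apply/ltW; rewrite add0r in hk.
rewrite eseries0 // probability_setT; by rewrite lee_fin ler10.
Qed.

Lemma int_le1' (h : BX X -> R) : measurable_fun setT h ->
  (forall z, 0 <= h z <= 1) -> (\int[mu]_z ((h z * Q z)%:E * 1%:E) <= 1)%E.
Proof.
move=> mh h01; under eq_integral => z _ do rewrite mule1.
exact: int_le1.
Qed.

End parts.
Arguments bound_ratio {R X Q p}.
Arguments malpha {R X Q}.
Arguments alpha01 {R X Q}.
Arguments alpha_lb {R X Q}.
Arguments int_le1 {R X} mu {Q}.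
Arguments int_le1' {R X} mu {Q}.
Arguments mEset {R X g}.
Arguments pos_set {R X} mu {g}.

Lemma indic_ge0E (R : realType) (T : Type) (B : set T) y : (0 <= (\1_B y : R)%:E)%E.
Proof. by rewrite lee_fin indicE ler0n. Qed.

Theorem mainTheorem6 (R : realType) (X : completeNormedModType R)
  (mu : probability (BX X) R) (L : nat)
  (pi : nat -> X -> R) (Q : nat -> X -> R) :
  separable X ->
  (forall j, (j <= L)%N ->
     measurable_fun setT (pi j : BX X -> R) /\ (forall x, 0 <= pi j x) /\
     (\int[mu]_x (pi j x)%:E = 1)%E) ->
  (forall l, (1 <= l <= L)%N ->
     measurable_fun setT (Q l : BX X -> R) /\ (forall x, 0 <= Q l x) /\
     (\int[mu]_x (Q l x)%:E = 1)%E) ->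
  (forall l, (1 <= l <= L)%N -> continuous (Q l) /\ forall x, 0 < Q l x) ->
  (forall j, (j <= L)%N -> continuous (pi j) /\ forall x, 0 < pi j x) ->
  (forall l, (1 <= l <= L)%N -> forall j, j = l.-1 \/ j = l ->
     forall cr : R, 0 < cr -> compact [set th : X | Q l th / pi j th <= cr]) ->
  (exists c : R, 0 < c < 1 /\
     forall l, (1 <= l <= L)%N -> forall j, j = l.-1 \/ j = l ->
       (c%:E <= ess_inf mu (fun z : BX X => (Q l z / pi j z)%:E))%E) ->
  (exists r C_r : R, 1 < r /\
     forall l, (1 <= l <= L)%N ->
       (\int[mu]_z ((Q l z) `^ r)%:E <= C_r%:E)%E) ->
  forall l, (1 <= l <= L)%N ->
    exists V : BX X * BX X -> R,
      measurable_fun setT V /\ (forall x, 1 <= V x) /\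
    exists S : set (BX X * BX X),
      measurable S /\ small_set mu (pi l.-1) (pi l) (Q l) S /\
    exists lam kappa : R, 0 < lam < 1 /\
      forall th : BX X * BX X,
        (Pop mu (pi l.-1) (pi l) (Q l) (fun x => (V x)%:E) th
         <= (lam * V th)%:E + (kappa * \1_S th)%:E)%E.
Proof.
move=> _ hpi hQ hQc hpic hcomp _ _ l hl.
have hlL : (l <= L)%N by case/andP: hl.
have hl1 : (l.-1 <= L)%N by apply: leq_trans (leq_pred l) hlL.
have [mQ [_ Q1]] := hQ l hl.
have [cQ Qpos] := hQc l hl.
have [mp1 _] := hpi l.-1 hl1.
have [cp1 p1pos] := hpic l.-1 hl1.
have [mp2 _] := hpi l hlL.
have [cp2 p2pos] := hpic l hlL.
have [M1 [M10 hM1]] := bound_ratio cQ cp1 Qpos p1pos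
  (hcomp l hl l.-1 (or_introl erefl) 1 ltr01).
have [M2 [M20 hM2]] := bound_ratio cQ cp2 Qpos p2pos
  (hcomp l hl l (or_intror erefl) 1 ltr01).
pose M := M1 + M2.
have M0 : 0 < M by rewrite addr_gt0.
have hM1' x : pi l.-1 x / Q l x <= M.
  by apply: le_trans (hM1 x) _; rewrite lerDl ltW.
have hM2' x : pi l x / Q l x <= M.
  by apply: le_trans (hM2 x) _; rewrite lerDr ltW.
have ma1 th : measurable_fun setT (alpha (Q l) (pi l.-1) th) by exact: malpha.
have ma2 th : measurable_fun setT (alpha (Q l) (pi l) th) by exact: malpha.
have a1 th z := alpha01 Qpos _ th z p1pos.
have a2 th z := alpha01 Qpos _ th z p2pos.
have hmax1 : forall (a b : R), 0 <= a <= 1 -> 0 <= b <= 1 -> 0 <= Num.max (a - b) 0 <= 1.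
  move=> x y /andP[a0 a1'] /andP[b0 b1]; rewrite le_max lexx orbT /= ge_max ler01 andbT.
  by rewrite lerBlDr (le_trans a1') // lerDl.
have hmax2 : forall (a b : R), 0 <= a <= 1 -> 0 <= b <= 1 -> 0 <= Num.max a b <= 1.
  move=> x y /andP[a0 a1'] /andP[b0 b1]; rewrite le_max a0 /= ge_max a1'. by rewrite b1.
have hmin : forall (a b : R), 0 <= a <= 1 -> 0 <= b <= 1 -> 0 <= Num.min a b <= 1.
  move=> x y /andP[a0 a1'] /andP[b0 b1]; rewrite le_min a0 b0 /= ge_min a1'. by rewrite b1.
exists (fun _ => 1); split; first exact: measurable_cst.
split; first by move=> _; exact: lexx.
exists setT; split; first exact: measurableT.
split.
  exists 1%N; split => //.
  pose g := fun z : BX X => Num.min 1 (Num.min (pi l.-1 z / (M * Q l z))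
                                   (pi l z / (M * Q l z))) * Q l z.
  have mdiv (p : BX X -> R) : measurable_fun setT p ->
      measurable_fun setT (fun z => p z / (M * Q l z)).
    move=> mp.
    have mg : measurable_fun setT (fun z : BX X => M * Q l z) by apply: measurable_funM.
    have mi := measurableT_comp (measurable_inv R) mg.
    exact: measurable_funM mp mi.
  have mg : measurable_fun setT g.
    apply: measurable_funM => //; apply: (@measurable_minr _ _ _ _ (fun=> 1)) => //.
    exact: measurable_minr (mdiv _ mp1) (mdiv _ mp2).
  have gp z : 0 < g z.
    apply: mulr_gt0 => //; rewrite !lt_min ltr01 /=.
    by rewrite !divr_gt0 // mulr_gt0.
  have [n hn] := pos_set mu mg gp.
  have mE := mEset (n.+1%:R^-1) mg.
  have nuE B : mscale ((n.+1%:R^-1 : R)%:nng) (dm (mrestr mu mE)) B =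
    ((n.+1%:R^-1 : R)%:E * mu (dg @^-1` B `&` [set z | (n.+1%:R^-1 <= g z)%R]))%E by [].
  exists (mscale ((n.+1%:R^-1 : R)%:nng) (dm (mrestr mu mE))); split.
    suff h : (0 < (n.+1%:R^-1 : R)%:E * mu (dg @^-1` setT `&` [set z | (n.+1%:R^-1 <= g z)%R]))%E by exact: h.
    rewrite preimage_setT setTI.
    by rewrite mule_gt0 // lte_fin invr_gt0 ltr0n.
  move=> x _ A mA; rewrite /pker_iter /= /Pop.
  have G2 : (0 <= \int[mu]_z ((Num.max (alpha (Q l) (pi l.-1) x.1 z -
      alpha (Q l) (pi l) x.2 z) 0 * Q l z)%:E * (\1_A (z, x.2))%:E))%E.
    apply: integral_ge0 => z _; apply: mule_ge0; last exact: indic_ge0E.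
    by rewrite lee_fin mulr_ge0 // ?le_max ?lexx ?orbT // ltW.
  have G3 : (0 <= \int[mu]_z ((Num.max (alpha (Q l) (pi l) x.2 z -
      alpha (Q l) (pi l.-1) x.1 z) 0 * Q l z)%:E * (\1_A (x.1, z))%:E))%E.
    apply: integral_ge0 => z _; apply: mule_ge0; last exact: indic_ge0E.
    by rewrite lee_fin mulr_ge0 // ?le_max ?lexx ?orbT // ltW.
  have G4 : (0 <= (\1_A x)%:E * (1 - \int[mu]_z ((Num.max (alpha (Q l) (pi l.-1) x.1 z)
                                     (alpha (Q l) (pi l) x.2 z) * Q l z)%:E)))%E.
    apply: mule_ge0; first exact: indic_ge0E.
    rewrite sube_ge0; last by rewrite orbT.
    apply: (int_le1 mu mQ Qpos Q1 (fun z => Num.max (alpha (Q l) (pi l.-1) x.1 z)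
                                     (alpha (Q l) (pi l) x.2 z))).
      exact: measurable_maxr.
    move=> z; case/andP: (a1 x.1 z) => b0 b1; case/andP: (a2 x.2 z) => c0 c1.
    by rewrite le_max b0 /= ge_max b1 c1.
  apply: le_trans _ (lee_paddr G4 (lee_paddr G3 (lee_paddr G2 (lexx _)))).
  set S' := dg @^-1` A `&` [set z | (n.+1%:R^-1 <= g z)%R].
  have mS' : measurable S'.
    apply: measurableI => //; have := mdg measurableT _ mA; by rewrite setTI.
  apply: (@le_trans _ _ ((n.+1%:R^-1 : R)%:E * mu S')%E); first exact: lexx.
  have -> : ((n.+1%:R^-1 : R)%:E * mu S')%E =
      (\int[mu]_z ((n.+1%:R^-1 : R) * \1_S' z)%:E)%E.
    have hk : ((n.+1%:R^-1 : R) < 0)%R -> (fun=> S') (n.+1%:R^-1 : R) = set0.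
      by rewrite ltNge invr_ge0 ler0n.
    rewrite (integralZl_indic measurableT (fun=> S') _ hk mS').
    by rewrite integral_indic // setIT.
  have h10 : forall z : BX X, setT z -> (0 <= ((n.+1%:R^-1 : R) * \1_S' z)%:E)%E.
    by move=> z zT; rewrite lee_fin mulr_ge0 // indicE ler0n.
  have m1 : measurable_fun setT (fun z : BX X => ((n.+1%:R^-1 : R) * \1_S' z)%:E).
    apply/measurable_EFinP; apply: measurable_funM => //.
  have m2 : measurable_fun setT (fun z : BX X => ((Num.min (alpha (Q l) (pi l.-1) x.1 z)
           (alpha (Q l) (pi l) x.2 z) * Q l z)%:E * (\1_A (z, z))%:E)%E).
    apply: emeasurable_funM; apply/measurable_EFinP.
      by apply: measurable_funM => //; exact: measurable_minr.
    by apply: measurableT_comp mdg; exact: measurable_indic.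
  apply: (ge0_le_integral mu measurableT h10 m1 m2).
  - move=> z _; have [zS|zS] := boolP (z \in S').
      move: (zS); rewrite inE => -[hA hE].
      rewrite indicE zS mulr1 indicE mem_set // mule1 lee_fin.
      apply: le_trans hE _; rewrite /g; apply: ler_wpM2r; first exact: ltW.
      rewrite le_min; apply/andP; split.
        apply: le_trans (alpha_lb Qpos _ x.1 z M p1pos M0 (hM1' _)).
        by rewrite le_min !ge_min !lexx /= ?orbT.
      apply: le_trans (alpha_lb Qpos _ x.2 z M p2pos M0 (hM2' _)).
      by rewrite le_min !ge_min !lexx /= ?orbT.
    rewrite indicE (negbTE zS) mulr0; apply: mule_ge0; last exact: indic_ge0E.
    rewrite lee_fin mulr_ge0 //; last exact: ltW.
    by case/andP: (hmin _ _ (a1 x.1 z) (a2 x.2 z)).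
exists (1/2), 4; split; first by rewrite divr_gt0 //= ltr_pdivrMr // mul1r ltr1n.
move=> th; rewrite /Pop.
have T1 := int_le1' mu mQ Qpos Q1 _ (measurable_minr (ma1 th.1) (ma2 th.2))
  (fun z => hmin _ _ (a1 th.1 z) (a2 th.2 z)).
have T2 := int_le1' mu mQ Qpos Q1
  _ (measurable_maxr (measurable_funB (ma1 th.1) (ma2 th.2)) (measurable_cst (0:R)))
  (fun z => hmax1 _ _ (a1 th.1 z) (a2 th.2 z)).
have T3 := int_le1' mu mQ Qpos Q1
  _ (measurable_maxr (measurable_funB (ma2 th.2) (ma1 th.1)) (measurable_cst (0:R)))
  (fun z => hmax1 _ _ (a2 th.2 z) (a1 th.1 z)).
have I0 : (0 <= \int[mu]_z ((Num.max (alpha (Q l) (pi l.-1) th.1 z)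
                                     (alpha (Q l) (pi l) th.2 z) * Q l z)%:E))%E.
  apply: integral_ge0 => z _; rewrite lee_fin mulr_ge0 //; last exact: ltW.
  by case/andP: (hmax2 _ _ (a1 th.1 z) (a2 th.2 z)).
have T4 : (1%:E * (1 - \int[mu]_z ((Num.max (alpha (Q l) (pi l.-1) th.1 z)
                                     (alpha (Q l) (pi l) th.2 z) * Q l z)%:E)) <= 1)%E.
  by rewrite mul1e; apply: le_trans (leeB (lexx 1%E) I0) _; rewrite sube0.
apply: le_trans (leeD (leeD (leeD T1 T2) T3) T4) _.
rewrite indicE mem_set // -!EFinD lee_fin /=; lra.
Qed.
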